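(* Let $R=\mathbb{F}_q+v\mathbb{F}_q+v^2\mathbb{F}_q$ with $v^3=v$, and let $M$ be an $n\times n$ circulant matrix over $R$. Then $G=(I_n\mid M)$ generates an isodual code, and hence a formally self-dual code, over $R$ (of length $2n$).
   Context: $q$ is a prime power and $R=\mathbb{F}_q[v]/\langle v^3-v\rangle$. A circulant matrix is one in which each row is the cyclic shift one position to the right of the previous row. A linear code of length $N$ over $R$ is an $R$-submodule of $R^N$; $C^\perp=\{x\in R^N:\sum x_iy_i=0\ \forall y\in C\}$. Two codes are equivalent if one is obtained from the other by a permutation of coordinates combined with multiplication of coordinates by units of $R$. $C$ is isodual if $C$ is equivalent to $C^\perp$. For $c\in R^N$ written uniquely as $a_0+va_1+v^2a_2$ with $a_i\in\mathbb{F}_q^N$, the Gray map is $\Psi(c)=(a_0,a_0+a_2,a_1)$ and the Lee weight $w_L(c)$ is the Hamming weight of $\Psi(c)$. $C$ is formally self-dual if $C$ and $C^\perp$ have the same Lee weight enumerator $\sum_c X^{3N-w_L(c)}Y^{w_L(c)}$. *)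

(* Defs.v *)
From HB Require Import structures.
From mathcomp Require Import all_boot all_order fingroup perm.
From mathcomp Require Import all_algebra.
Set Implicit Arguments. Unset Strict Implicit. Unset Printing Implicit Defensive.
Import GRing.Theory.
Local Open Scope ring_scope.

(* R = F[v]/<v^3 - v>, for a finite field F = F_q (q an arbitrary prime power). *)
Definition Rv (F : finFieldType) := {poly %/ ('X^3 - 'X : {poly F})}.

Section Codes.
Variable F : finFieldType.
Local Notation R := (Rv F).

Definition vR : R := 'qX.

Definition unitR (u : R) : Prop := exists w : R, u * w = 1.

Definition linear_code (N : nat) (C : {set 'rV[R]_N}) : Prop :=
  0 \in C /\ (forall (a : R) (x y : 'rV[R]_N), x \in C -> y \in C -> a *: x + y \in C).

Definition dual (N : nat) (C : {set 'rV[R]_N}) : {set 'rV[R]_N} :=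
  [set x : 'rV[R]_N | [forall y in C, \sum_(i < N) x ord0 i * y ord0 i == 0]].

Definition equiv_codes (N : nat) (C1 C2 : {set 'rV[R]_N}) : Prop :=
  exists (s : 'S_N) (u : 'I_N -> R), (forall i, unitR (u i)) /\
    C2 = [set (\row_j (u j * x ord0 (s j))) | x : 'rV[R]_N in C1].

Definition isodual (N : nat) (C : {set 'rV[R]_N}) : Prop := equiv_codes C (dual C).

(* components of r = a0 + v a1 + v^2 a2 (coefficients of the reduced representative) *)
Definition comp (r : R) (k : nat) : F := (r : {poly F})`_k.

(* Lee weight = Hamming weight of Gray image (a0, a0 + a2, a1) *)
Definition leeR (r : R) : nat :=
  (nat_of_bool (comp r 0 != 0)%R + nat_of_bool (comp r 0 + comp r 2 != 0)%R
   + nat_of_bool (comp r 1 != 0)%R)%N.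

Definition lee (N : nat) (x : 'rV[R]_N) : nat := (\sum_(i < N) leeR (x ord0 i))%N.

(* Lee weight enumerator sum_c X^(3N - wL c) Y^(wL c), as a bivariate integer
   polynomial in {poly {poly int}}: X is the inner variable ('X%:P), Y the outer ('X). *)
Definition lee_enum (N : nat) (C : {set 'rV[R]_N}) : {poly {poly int}} :=
  \sum_(c in C) ((('X : {poly int}) ^+ (3 * N - lee c)%N)%:P * 'X ^+ lee c).

Definition formally_self_dual (N : nat) (C : {set 'rV[R]_N}) : Prop :=
  lee_enum C = lee_enum (dual C).

Definition gen_code (k N : nat) (G : 'M[R]_(k, N)) : {set 'rV[R]_N} :=
  [set (x *m G) | x : 'rV[R]_k].

(* each row is the cyclic right shift of the previous one (indices mod n) *)
Definition circulant (n : nat) (M : 'M[R]_n) : Prop :=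
  forall i j : 'I_n, M (ordS i) (ordS j) = M i j.
End Codes.

(* Main.v *)
Require Import Defs.
From HB Require Import structures.
From mathcomp Require Import all_boot all_order fingroup perm.
From mathcomp Require Import all_algebra.
Set Implicit Arguments. Unset Strict Implicit. Unset Printing Implicit Defensive.
Import GRing.Theory.

Definition Jo (n : nat) (i : 'I_n) : 'I_n :=
  Ordinal (ltn_pmod (n - i) (leq_trans (ltn0Sn i) (ltn_ord i))).

Lemma JoK n : involutive (@Jo n).
Proof.
move=> i; apply: val_inj => /=.
have hn : 0 < n by apply: leq_trans (ltn0Sn i) (ltn_ord i).
case: (posnP i) => [i0|ip].
  by rewrite i0 subn0 modnn subn0 modnn.
rewrite (modn_small (m:=n-i)); last by rewrite ltn_subrL ip hn.
by rewrite subKn ?(ltnW (ltn_ord i)) // modn_small.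
Qed.

Lemma iter_ordS n k (a : 'I_n) : val (iter k (@ordS n) a) = (a + k) %% n.
Proof.
elim: k => [|k IH]; first by rewrite addn0 modn_small.
by rewrite iterS /= IH addnS -addn1 modnDml addn1.
Qed.

Lemma circ_iter (T : Type) n (M : 'I_n -> 'I_n -> T) :
  (forall i j, M (ordS i) (ordS j) = M i j) ->
  forall k a b, M (iter k (@ordS n) a) (iter k (@ordS n) b) = M a b.
Proof. by move=> h; elim=> [//|k IH] a b; rewrite !iterS h IH. Qed.

Lemma circ_tr (T : Type) n (M : 'I_n -> 'I_n -> T) :
  (forall i j, M (ordS i) (ordS j) = M i j) ->
  forall i j, M j i = M (Jo i) (Jo j).
Proof.
move=> h i j; rewrite -(circ_iter h (i + j) (Jo i)); congr M; apply: val_inj;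
  rewrite iter_ordS /= modnDml.
  by rewrite addnA subnK ?(ltnW (ltn_ord _)) // modnDl modn_small.
by rewrite [i + j]addnC addnA subnK ?(ltnW (ltn_ord _)) // modnDl modn_small.
Qed.

Local Open Scope ring_scope.

Definition sJ n : 'S_n := perm (can_inj (@JoK n)).
Lemma sJE n i : sJ n i = Jo i. Proof. by rewrite permE. Qed.
Lemma sJV n : ((sJ n)^-1)%g = sJ n.
Proof.
apply/(mulgI (sJ n)); rewrite mulgV; apply/permP => i.
by rewrite permM !sJE JoK perm1.
Qed.

Definition PJ (R : comNzRingType) n : 'M[R]_n := perm_mx (sJ n).

Lemma mulPJ (R : comNzRingType) m n (x : 'M[R]_(m, n)) : x *m PJ R n = col_perm (sJ n) x.
Proof. by rewrite col_permE sJV. Qed.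

Lemma PJ2 (R : comNzRingType) n : PJ R n *m PJ R n = 1%:M.
Proof.
rewrite /PJ -perm_mxM -perm_mx1; congr perm_mx.
by apply/permP => i; rewrite permM !sJE JoK perm1.
Qed.

Lemma trM (R : comNzRingType) n (M : 'M[R]_n) :
  (forall i j, M (ordS i) (ordS j) = M i j) -> M^T = PJ R n *m M *m PJ R n.
Proof.
move=> h; apply/matrixP => i j.
rewrite mulPJ /PJ -row_permE !mxE !sJE.
exact: (@circ_tr R n (fun a b => M a b) h i j).
Qed.

Definition gfun n (j : 'I_(n + n)) : 'I_(n + n) :=
  match split j with inl i => rshift n (Jo i) | inr i => lshift n (Jo i) end.

Lemma gfun_l n (k : 'I_n) : gfun (lshift n k) = rshift n (Jo k).
Proof. by rewrite /gfun (unsplitK (inl k)). Qed.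
Lemma gfun_r n (k : 'I_n) : gfun (rshift n k) = lshift n (Jo k).
Proof. by rewrite /gfun (unsplitK (inr k)). Qed.
Lemma gfunK n : involutive (@gfun n).
Proof.
by move=> j; case: (split_ordP j) => k ->; rewrite ?gfun_l ?gfun_r ?gfun_l ?gfun_r JoK.
Qed.

Definition s2 n : 'S_(n + n) := perm (can_inj (@gfunK n)).
Lemma s2E n j : s2 n j = gfun j. Proof. by rewrite permE. Qed.

Definition uf (R : comNzRingType) n (j : 'I_(n + n)) : R := if (j < n)%N then -1 else 1.

Lemma uf_l (R : comNzRingType) n (k : 'I_n) : uf R (lshift n k) = -1.
Proof. by rewrite /uf /= ltn_ord. Qed.
Lemma uf_r (R : comNzRingType) n (k : 'I_n) : uf R (rshift n k) = 1.
Proof. by rewrite /uf /= ltnNge leq_addr. Qed.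
Lemma uf2 (R : comNzRingType) n j : uf R j * uf R (n:=n) j = 1.
Proof. by rewrite /uf; case: ifP; rewrite ?mulr1 ?mulrNN ?mulr1. Qed.

Definition fmap (R : comNzRingType) n (x : 'rV[R]_(n + n)) : 'rV[R]_(n + n) :=
  \row_j (uf R j * x ord0 (s2 n j)).

Lemma fmap_row (R : comNzRingType) n (x z : 'rV[R]_n) :
  fmap (row_mx x z) = row_mx (- (z *m PJ R n)) (x *m PJ R n).
Proof.
apply/rowP => j; rewrite !mxE s2E; case: (split_ordP j) => k ->.
  by rewrite gfun_l uf_l (unsplitK (inr (Jo k))) mulPJ !mxE sJE mulN1r.
by rewrite gfun_r uf_r (unsplitK (inl (Jo k))) mulPJ !mxE sJE mul1r.
Qed.

Lemma fmap_inj (R : comNzRingType) n : injective (@fmap R n).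
Proof.
move=> x y /rowP h; apply/rowP => k.
have := h (s2 n k); rewrite !mxE !s2E gfunK => e.
by rewrite -[x _ _]mul1r -(uf2 R (gfun k)) -mulrA e mulrA uf2 mul1r.
Qed.

Lemma dotE (R : comNzRingType) N (a b : 'rV[R]_N) :
  \sum_(i < N) a ord0 i * b ord0 i = (a *m b^T) ord0 ord0.
Proof. by rewrite mxE; apply: eq_bigr => i _; rewrite mxE. Qed.

Lemma compN (F : finFieldType) (r : Rv F) k : Defs.comp (- r) k = - Defs.comp r k.
Proof. by rewrite /Defs.comp -coefN. Qed.

Lemma leeR_opp (F : finFieldType) (r : Rv F) : leeR (- r) = leeR r.
Proof. by rewrite /leeR !compN -opprD !oppr_eq0. Qed.

Lemma lee_fmap (F : finFieldType) n (x : 'rV[Rv F]_(n + n)) : lee (fmap x) = lee x.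
Proof.
rewrite /lee [RHS](reindex_inj (@perm_inj _ (s2 n))); apply: eq_bigr => j _.
rewrite mxE /uf; case: ifP => _; by rewrite ?mulN1r ?mul1r ?leeR_opp.
Qed.

Lemma dual_eq (F : finFieldType) n (M : 'M[Rv F]_n) :
  (forall i j, M (ordS i) (ordS j) = M i j) ->
  dual (gen_code (row_mx (1%:M : 'M[Rv F]_n) M)) =
  (@fmap (Rv F) n) @: gen_code (row_mx (1%:M : 'M[Rv F]_n) M).
Proof.
move=> hM; set C := gen_code _.
have memC c : c \in C -> exists x, c = row_mx x (x *m M).
  by case/imsetP => x _ ->; exists x; rewrite mul_mx_row mulmx1.
have inC x : row_mx x (x *m M) \in C.
  by apply/imsetP; exists x => //; rewrite mul_mx_row mulmx1.
pose P := PJ (Rv F) n.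
have hT : M^T = P *m M *m P := trM hM.
have P2 : P *m P = 1%:M := PJ2 (Rv F) n.
apply/setP => y; apply/idP/idP.
  rewrite in_set => /forall_inP hy.
  rewrite -(hsubmxK y); set a := lsubmx y; set b := rsubmx y.
  have ha : a = - (b *m M^T).
    apply/rowP => i; apply/eqP; rewrite [X in _ == X]mxE -subr_eq0 opprK.
    have := hy _ (inC (delta_mx 0 i)); rewrite dotE -(hsubmxK y) -/a -/b.
    rewrite tr_row_mx mul_row_col trmx_mul mulmxA -mulmxDl trmx_delta -colE.
    by rewrite !mxE.
  apply/imsetP; exists (row_mx (b *m P) (b *m P *m M)); first exact: inC.
  rewrite fmap_row -/P ha hT -[b *m P *m P]mulmxA P2 mulmx1 !mulmxA.
  reflexivity.
case/imsetP => c /memC [x ->] ->; rewrite in_set; apply/forall_inP => w /memC [z ->].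
rewrite dotE fmap_row -/P tr_row_mx mul_row_col trmx_mul hT mulNmx.
have -> : x *m P *m (P *m M *m P *m z^T) = x *m M *m P *m z^T.
  by rewrite !mulmxA -[x *m P *m P]mulmxA P2 mulmx1.
by rewrite addNr mxE.
Qed.

Theorem theorem15 (F : finFieldType) (n : nat) (M : 'M[Rv F]_n) :
  circulant M ->
  let C := gen_code (row_mx (1%:M : 'M[Rv F]_n) M) in
  linear_code C /\ isodual C /\ formally_self_dual C.
Proof.
move=> hM C; split; [|split].
- split; first by apply/imsetP; exists 0; rewrite ?mul0mx.
  move=> a x y /imsetP[x' _ ->] /imsetP[y' _ ->]; apply/imsetP.
  by exists (a *: x' + y') => //; rewrite mulmxDl scalemxAl.
- exists (s2 n), (@uf (Rv F) n); split; last exact: (dual_eq hM).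
  by move=> i; exists (uf (Rv F) i); exact: uf2.
- rewrite /formally_self_dual /C (dual_eq hM) /lee_enum [in RHS]big_imset /=.
    by apply: eq_bigr => c _; rewrite lee_fmap.
  by move=> x y _ _; exact: fmap_inj.
Qed.
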